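(* Suppose route sets $\mathbf R_s\in\mathcal R([e,\ell];\theta_s)$ and arrival-time vectors $\bm a_s\in\mathcal X(\mathbf R_s,[e,\ell];\theta_s)$, $s\in\mathcal S$, satisfy: (i) for every $i\in V_{\mathrm{cont}}$ and every $\beta\in\mathbb R$: either $a_{si}\le \beta+w_i/2$ for all $s$, or $a_{si}\ge \beta-w_i/2$ for all $s$; and (ii) for every $i\in V_{\mathrm{disc}}$ and every $b\in\{1,\dots,N_i-1\}$: either $a_{si}\le \bar y_{ib}$ for all $s$, or $a_{si}\ge \underline y_{i,b+1}$ for all $s$. Define $\tau^\star$ by: for $i\in V_{\mathrm{cont}}$, $\tau^\star_i=[y_i,y_i+w_i]$ with $y_i=\min\{\ell_i-w_i,\ \min_{s\in\mathcal S}a_{si}\}$; for $i\in V_{\mathrm{disc}}$, $\tau^\star_i=[\underline y_{ib_i},\bar y_{ib_i}]$ where $b_i$ is an index minimizing $\bar y_{ib}$ over $\{b\in\{1,\dots,N_i\}:\bar y_{ib}\ge\max_{s\in\mathcal S}a_{si}\}$. Then $\tau^\star_i\in TW_i$ for all $i\in V_C$, $\bm a_s\in\mathcal X(\mathbf R_s,\tau^\star;\theta_s)$ for all $s$, and $(\tau^\star,\{\mathbf R_s\}_{s\in\mathcal S})$ is a feasible TWAVRP solution.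
   Context: Let $G=(V,A)$ be a directed graph with $V=\{0,1,\dots,n\}$; node $0$ is the depot and $V_C=V\setminus\{0\}$ is the set of customers. The depot has operating window $[e_0,\ell_0]$, vehicles have capacity $Q$, and each customer $i\in V_C$ has an exogenous time window $[e_i,\ell_i]$. A vector of operational parameters $\theta$ consists of arc costs $c_{ij}\ge 0$ and arc travel times $t_{ij}\ge0$ for $(i,j)\in A$, and demands $q_i\ge 0$ and service times $u_i\ge 0$ for $i\in V_C$. The customer set is partitioned as $V_C=V_{\mathrm{cont}}\cup V_{\mathrm{disc}}$ (disjoint). For $i\in V_{\mathrm{cont}}$ a width $w_i\ge0$ with $e_i\le \ell_i-w_i$ is given and $TW_i=\{[y,y+w_i]: e_i\le y\le \ell_i-w_i\}$. For $i\in V_{\mathrm{disc}}$, $TW_i=\{[\underline y_{i1},\bar y_{i1}],\dots,[\underline y_{iN_i},\bar y_{iN_i}]\}$ is a finite set of intervals with $\underline y_{ib}\le\bar y_{ib}$, none contained in another, ordered so that $e_i=\underline y_{i1}<\dots<\underline y_{iN_i}$ and $\bar y_{i1}<\dots<\bar y_{iN_i}=\ell_i$. A route set $\mathbf R=(R_1,\dots,R_m)$ is a collection of pairwise disjoint nonempty sequences $R_k=(R_{k,1},\dots,R_{k,n_k})$ of distinct customers (every customer with positive demand appearing in exactly one sequence). For a vector $\tau=(\tau_1,\dots,\tau_n)$ of closed intervals, $\mathcal X(\mathbf R,\tau;\theta)$ is the set of $\bm a\in\mathbb R^n_{\ge0}$ with: $a_{R_{k,1}}\ge e_0+t_{0,R_{k,1}}$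 for all $k$; $a_{R_{k,l+1}}-a_{R_{k,l}}\ge t_{R_{k,l},R_{k,l+1}}+u_{R_{k,l}}$ for all $k$ and $1\le l\le n_k-1$; $a_{R_{k,n_k}}\le \ell_0-t_{R_{k,n_k},0}-u_{R_{k,n_k}}$ for all $k$; and $a_i\in\tau_i$ for all $i\in V_C$. We write $\mathbf R\in\mathcal R(\tau;\theta)$ if $\sum_{i\in R_k}q_i\le Q$ for every $k$ and $\mathcal X(\mathbf R,\tau;\theta)\neq\emptyset$. Finitely many scenarios $\theta_1,\dots,\theta_S$ are given, $\mathcal S=\{1,\dots,S\}$. A feasible TWAVRP solution is a pair $(\tau,\{\mathbf R_s\}_{s\in\mathcal S})$ with $\tau_i\in TW_i$ for all $i\in V_C$ and $\mathbf R_s\in\mathcal R(\tau;\theta_s)$ for all $s$. $[e,\ell]$ denotes the vector $([e_1,\ell_1],\dots,[e_n,\ell_n])$, and $a_{si}$ denotes the $i$-th component of $\bm a_s$. *)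

(* Defs.v *)
From Stdlib Require Export Reals Lra Lia List.
Export ListNotations.
Open Scope R_scope.

(* Operational parameters theta: arc costs c, travel times t (indexed by
   nodes 0..n, node 0 = depot), demands q and service times u (customers). *)
Record params := mkParams {
  c : nat -> nat -> R;
  t : nat -> nat -> R;
  q : nat -> R;
  u : nat -> R
}.

Definition interval := (R * R)%type.
Definition in_interval (x : R) (I : interval) : Prop := fst I <= x <= snd I.

Definition is_customer (n i : nat) : Prop := (1 <= i <= n)%nat.

Definition route_set (n : nat) (th : params) (Rs : list (list nat)) : Prop :=
  Forall (fun r => r <> nil) Rs /\
  NoDup (concat Rs) /\
  (forall i, In i (concat Rs) -> is_customer n i) /\
  (forall i, is_customer n i -> q th i > 0 -> In i (concat Rs)).

Definition route_load (th : params) (r : list nat) : R :=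
  fold_right Rplus 0 (map (q th) r).

Definition in_X (n : nat) (e l : nat -> R) (Rs : list (list nat))
    (tau : nat -> interval) (th : params) (a : nat -> R) : Prop :=
  (forall i, is_customer n i -> 0 <= a i) /\
  (forall r, In r Rs ->
     a (nth 0 r 0%nat) >= e 0%nat + t th 0%nat (nth 0 r 0%nat)) /\
  (forall r, In r Rs -> forall k, (S k < length r)%nat ->
     a (nth (S k) r 0%nat) - a (nth k r 0%nat)
       >= t th (nth k r 0%nat) (nth (S k) r 0%nat) + u th (nth k r 0%nat)) /\
  (forall r, In r Rs ->
     let last := nth (length r - 1) r 0%nat in
     a last <= l 0%nat - t th last 0%nat - u th last) /\
  (forall i, is_customer n i -> in_interval (a i) (tau i)).

Definition feasible_routes (n : nat) (e l : nat -> R) (Qcap : R)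
    (Rs : list (list nat)) (tau : nat -> interval) (th : params) : Prop :=
  route_set n th Rs /\
  (forall r, In r Rs -> route_load th r <= Qcap) /\
  (exists a : nat -> R, in_X n e l Rs tau th a).

(* Time window sets TW_i. isCont i = true iff i in V_cont. Discrete windows
   are [ylo i b, yhi i b], b = 1..N i. *)
Definition in_TW (e l : nat -> R) (isCont : nat -> bool) (w : nat -> R)
    (N : nat -> nat) (ylo yhi : nat -> nat -> R) (i : nat) (I : interval) : Prop :=
  if isCont i then
    exists y, e i <= y <= l i - w i /\ I = (y, y + w i)
  else
    exists b, (1 <= b <= N i)%nat /\ I = (ylo i b, yhi i b).

(* Feasible TWAVRP solution (tau, {R_s}); scenarios indexed s = 0..S-1. *)
Definition feasible_solution (n : nat) (e l : nat -> R) (Qcap : R)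
    (isCont : nat -> bool) (w : nat -> R) (N : nat -> nat)
    (ylo yhi : nat -> nat -> R) (S : nat) (theta : nat -> params)
    (tau : nat -> interval) (Rs : nat -> list (list nat)) : Prop :=
  (forall i, is_customer n i -> in_TW e l isCont w N ylo yhi i (tau i)) /\
  (forall s, (s < S)%nat -> feasible_routes n e l Qcap (Rs s) tau (theta s)).

Fixpoint min_upto (f : nat -> R) (k : nat) : R :=
  match k with 0%nat => f 0%nat | S k' => Rmin (min_upto f k') (f k) end.
Fixpoint max_upto (f : nat -> R) (k : nat) : R :=
  match k with 0%nat => f 0%nat | S k' => Rmax (max_upto f k') (f k) end.

(* tau^star, given the scenario arrival times a and a choice bsel of b_i *)
Definition tau_star (l : nat -> R) (isCont : nat -> bool) (w : nat -> R)
    (ylo yhi : nat -> nat -> R) (S : nat) (a : nat -> nat -> R)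
    (bsel : nat -> nat) (i : nat) : interval :=
  if isCont i then
    let y := Rmin (l i - w i) (min_upto (fun s => a s i) (S - 1)) in (y, y + w i)
  else (ylo i (bsel i), yhi i (bsel i)).

(* Main.v *)
Require Import Defs.

Lemma min_upto_le (f : nat -> R) k s : (s <= k)%nat -> min_upto f k <= f s.
Proof.
  induction k; intros H; simpl.
  - assert (s = 0%nat) by lia; subst; lra.
  - destruct (Nat.eq_dec s (Datatypes.S k)).
    + subst. apply Rmin_r.
    + eapply Rle_trans; [apply Rmin_l|]. apply IHk; lia.
Qed.

Lemma min_upto_ge (f : nat -> R) k c0 : (forall s, (s <= k)%nat -> c0 <= f s) -> c0 <= min_upto f k.
Proof.
  induction k; intros H; simpl.
  - apply H; lia.
  - apply Rmin_glb; [apply IHk; intros; apply H; lia| apply H; lia].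
Qed.

Lemma max_upto_ge (f : nat -> R) k s : (s <= k)%nat -> f s <= max_upto f k.
Proof.
  induction k; intros H; simpl.
  - assert (s = 0%nat) by lia; subst; lra.
  - destruct (Nat.eq_dec s (Datatypes.S k)).
    + subst. apply Rmax_r.
    + eapply Rle_trans; [|apply Rmax_l]. apply IHk; lia.
Qed.

Lemma max_upto_le (f : nat -> R) k c0 : (forall s, (s <= k)%nat -> f s <= c0) -> max_upto f k <= c0.
Proof.
  induction k; intros H; simpl.
  - apply H; lia.
  - apply Rmax_lub; [apply IHk; intros; apply H; lia| apply H; lia].
Qed.

Theorem mainTheorem2
  (n : nat) (e l : nat -> R) (Qcap : R)
  (isCont : nat -> bool) (w : nat -> R)
  (N : nat -> nat) (ylo yhi : nat -> nat -> R)
  (S : nat) (theta : nat -> params)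
  (* standing assumptions *)
  (HS : (1 <= S)%nat)
  (Htheta : forall s, (s < S)%nat ->
     (forall i j, 0 <= c (theta s) i j) /\ (forall i j, 0 <= t (theta s) i j) /\
     (forall i, is_customer n i -> 0 <= q (theta s) i /\ 0 <= u (theta s) i))
  (Hcont : forall i, is_customer n i -> isCont i = true ->
     0 <= w i /\ e i <= l i - w i)
  (Hdisc : forall i, is_customer n i -> isCont i = false ->
     (1 <= N i)%nat /\
     (forall b, (1 <= b <= N i)%nat -> ylo i b <= yhi i b) /\
     (forall b b', (1 <= b <= N i)%nat -> (1 <= b' <= N i)%nat -> b <> b' ->
        ~ (ylo i b' <= ylo i b /\ yhi i b <= yhi i b')) /\
     (forall b b', (1 <= b)%nat -> (b < b')%nat -> (b' <= N i)%nat ->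
        ylo i b < ylo i b' /\ yhi i b < yhi i b') /\
     e i = ylo i 1%nat /\ yhi i (N i) = l i)
  (* route sets and arrival times *)
  (Rs : nat -> list (list nat)) (a : nat -> nat -> R)
  (HR : forall s, (s < S)%nat ->
     feasible_routes n e l Qcap (Rs s) (fun i => (e i, l i)) (theta s))
  (Ha : forall s, (s < S)%nat ->
     in_X n e l (Rs s) (fun i => (e i, l i)) (theta s) (a s))
  (* condition (i) *)
  (Hi : forall i, is_customer n i -> isCont i = true -> forall beta : R,
     (forall s, (s < S)%nat -> a s i <= beta + w i / 2) \/
     (forall s, (s < S)%nat -> a s i >= beta - w i / 2))
  (* condition (ii) *)
  (Hii : forall i, is_customer n i -> isCont i = false ->
     forall b, (1 <= b <= N i - 1)%nat ->
     (forall s, (s < S)%nat -> a s i <= yhi i b) \/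
     (forall s, (s < S)%nat -> a s i >= ylo i (b + 1)%nat))
  (* b_i: any index minimizing yhi i b over {b | yhi i b >= max_s a s i} *)
  (bsel : nat -> nat)
  (Hbsel : forall i, is_customer n i -> isCont i = false ->
     (1 <= bsel i <= N i)%nat /\
     yhi i (bsel i) >= max_upto (fun s => a s i) (S - 1) /\
     (forall b, (1 <= b <= N i)%nat ->
        yhi i b >= max_upto (fun s => a s i) (S - 1) ->
        yhi i (bsel i) <= yhi i b)) :
  let tau := tau_star l isCont w ylo yhi S a bsel in
  (forall i, is_customer n i -> in_TW e l isCont w N ylo yhi i (tau i)) /\
  (forall s, (s < S)%nat -> in_X n e l (Rs s) tau (theta s) (a s)) /\
  feasible_solution n e l Qcap isCont w N ylo yhi S theta tau Rs.
Proof.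
  intros tau.
  assert (Hbnd : forall s i, (s < S)%nat -> is_customer n i -> e i <= a s i <= l i).
  { intros s i Hs Hc. destruct (Ha s Hs) as (_&_&_&_&H5). exact (H5 i Hc). }
  assert (HTW : forall i, is_customer n i -> in_TW e l isCont w N ylo yhi i (tau i)).
  { intros i Hc. unfold in_TW, tau, tau_star.
    destruct (isCont i) eqn:Ec.
    - destruct (Hcont i Hc Ec) as [Hw Hel].
      exists (Rmin (l i - w i) (min_upto (fun s => a s i) (S - 1))). split; [|reflexivity].
      split; [|apply Rmin_l].
      apply Rmin_glb; [lra|]. apply min_upto_ge. intros s Hs.
      apply (Hbnd s i); [lia|exact Hc].
    - exists (bsel i). split; [apply (Hbsel i Hc Ec)|reflexivity]. }
  assert (Hin : forall s i, (s < S)%nat -> is_customer n i -> in_interval (a s i) (tau i)).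
  { intros s i Hs Hc. unfold in_interval, tau, tau_star.
    destruct (isCont i) eqn:Ec; simpl.
    - set (m := min_upto (fun s => a s i) (S - 1)).
      assert (Hm : m <= a s i) by (apply (min_upto_le (fun s => a s i)); lia).
      split; [eapply Rle_trans; [apply Rmin_r|exact Hm]|].
      assert (Hd : a s i - m <= w i).
      { destruct (Hi i Hc Ec ((m + a s i)/2)) as [H1|H1].
        - specialize (H1 s Hs). lra.
        - assert ((m + a s i)/2 - w i / 2 <= m).
          { apply min_upto_ge. intros s' Hs'. specialize (H1 s' ltac:(lia)). lra. }
          lra. }
      destruct (Hbnd s i Hs Hc).
      unfold Rmin; destruct (Rle_dec (l i - w i) m); lra.
    - destruct (Hbsel i Hc Ec) as (Hb1 & Hb2 & Hb3).
      destruct (Hdisc i Hc Ec) as (HN & Hlh & _ & Hmono & He & Hl).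
      assert (Hmx : a s i <= max_upto (fun s => a s i) (S - 1))
        by (apply (max_upto_ge (fun s => a s i)); lia).
      split; [|lra].
      destruct (Nat.eq_dec (bsel i) 1) as [E1|E1].
      + rewrite E1, <- He. apply (Hbnd s i Hs Hc).
      + destruct (Hii i Hc Ec (bsel i - 1)%nat ltac:(lia)) as [H1|H1].
        * exfalso.
          assert (Hm2 : max_upto (fun s => a s i) (S - 1) <= yhi i (bsel i - 1)%nat).
          { apply max_upto_le. intros s' Hs'. apply H1; lia. }
          assert (H3 := Hb3 (bsel i - 1)%nat ltac:(lia) ltac:(lra)).
          destruct (Hmono (bsel i - 1)%nat (bsel i) ltac:(lia) ltac:(lia) ltac:(lia)).
          lra.
        * specialize (H1 s Hs). replace (bsel i - 1 + 1)%nat with (bsel i) in H1 by lia.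
          lra. }
  assert (HX : forall s, (s < S)%nat -> in_X n e l (Rs s) tau (theta s) (a s)).
  { intros s Hs. destruct (Ha s Hs) as (H1&H2&H3&H4&H5).
    split; [exact H1|]. split; [exact H2|]. split; [exact H3|]. split; [exact H4|].
    intros i Hc. apply Hin; assumption. }
  split; [exact HTW|]. split; [exact HX|]. split; [exact HTW|].
  intros s Hs. destruct (HR s Hs) as (H1 & H2 & _).
  split; [exact H1|]. split; [exact H2|]. exists (a s). apply HX; exact Hs.
Qed.
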